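(* Let $\mathcal H$ be a Hilbert space and $\mathcal S,\mathcal A\subseteq\mathcal H$ closed subspaces with $\mathcal S,\mathcal A,\mathcal S^\perp,\mathcal A^\perp$ nonzero, $\mathcal A\oplus\mathcal S^\perp=\mathcal H$, and $\sin(\mathcal A^\perp,\mathcal S)>0$. Fix $\lambda\in[0,1]$, let $B:=\lambda P_{\mathcal A\mathcal S^\perp}+(1-\lambda)P_{\mathcal S}$ and $\mathcal B:=\mathcal R(B)$. Then $$\frac{1}{1+\lambda^2\frac{\sin^2(\mathcal A,\mathcal S)}{\cos^2(\mathcal A,\mathcal S)}}\le\sin^2(\mathcal B^\perp,\mathcal S)\le\frac{1}{1+\lambda^2\frac{\cos^2(\mathcal A^\perp,\mathcal S)}{\sin^2(\mathcal A^\perp,\mathcal S)}}.$$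
   Context: $P_{\mathcal V}$ is the orthogonal projection onto a closed subspace $\mathcal V$, $\mathcal V^\perp$ its orthogonal complement, $\mathcal R(\cdot)$ the range. For closed subspaces with $\mathcal V_1\oplus\mathcal V_2=\mathcal H$, $P_{\mathcal V_1\mathcal V_2}$ is the oblique projection onto $\mathcal V_1$ along $\mathcal V_2$ (identity on $\mathcal V_1$, zero on $\mathcal V_2$). Angles between nonzero closed subspaces: $\cos(\mathcal V_1,\mathcal V_2):=\inf_{0\ne x\in\mathcal V_1}\|P_{\mathcal V_2}x\|/\|x\|$, $\sin(\mathcal V_1,\mathcal V_2):=\sup_{0\ne x\in\mathcal V_1}\|P_{\mathcal V_2^\perp}x\|/\|x\|$. *)

(* Defs.v *)
From Stdlib Require Import Reals Lra ClassicalEpsilon.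
Open Scope R_scope.
Set Implicit Arguments.

Record RHilbert := {
  hT :> Type;
  hzero : hT;
  hadd : hT -> hT -> hT;
  hopp : hT -> hT;
  hscal : R -> hT -> hT;
  hinner : hT -> hT -> R;
  haddA : forall x y z, hadd x (hadd y z) = hadd (hadd x y) z;
  haddC : forall x y, hadd x y = hadd y x;
  hadd0 : forall x, hadd hzero x = x;
  haddN : forall x, hadd (hopp x) x = hzero;
  hscalA : forall a b x, hscal a (hscal b x) = hscal (a * b) x;
  hscal1 : forall x, hscal 1 x = x;
  hscalDr : forall a x y, hscal a (hadd x y) = hadd (hscal a x) (hscal a y);
  hscalDl : forall a b x, hscal (a + b) x = hadd (hscal a x) (hscal b x);
  hinner_sym : forall x y, hinner x y = hinner y x;
  hinnerD : forall x y z, hinner (hadd x y) z = hinner x z + hinner y z;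
  hinnerZ : forall a x y, hinner (hscal a x) y = a * hinner x y;
  hinner_pos : forall x, 0 <= hinner x x;
  hinner_def : forall x, hinner x x = 0 -> x = hzero;
  hnorm_ := fun x => sqrt (hinner x x);
  hcomplete : forall u : nat -> hT,
    (forall eps, 0 < eps -> exists N, forall m n, (N <= m)%nat -> (N <= n)%nat ->
        hnorm_ (hadd (u m) (hopp (u n))) < eps) ->
    exists l, forall eps, 0 < eps -> exists N, forall n, (N <= n)%nat ->
        hnorm_ (hadd (u n) (hopp l)) < eps
}.

Section Hilb.
Context {H : RHilbert}.

Definition hsub (x y : H) : H := hadd H x (hopp H y).
Definition hnorm (x : H) : R := sqrt (hinner H x x).

Definition converges (u : nat -> H) (l : H) : Prop :=
  forall eps, 0 < eps -> exists N, forall n, (N <= n)%nat -> hnorm (hsub (u n) l) < eps.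

Definition closed_subspace (V : H -> Prop) : Prop :=
  V (hzero H) /\
  (forall x y, V x -> V y -> V (hadd H x y)) /\
  (forall a x, V x -> V (hscal H a x)) /\
  (forall u l, (forall n, V (u n)) -> converges u l -> V l).

Definition nonzero_sub (V : H -> Prop) : Prop := exists x, V x /\ x <> hzero H.

Definition orth (V : H -> Prop) : H -> Prop :=
  fun y => forall v, V v -> hinner H y v = 0.

Definition direct_sum_whole (V1 V2 : H -> Prop) : Prop :=
  (forall x, V1 x -> V2 x -> x = hzero H) /\
  (forall x, exists a b, V1 a /\ V2 b /\ x = hadd H a b).

Definition oproj (V : H -> Prop) (x : H) : H :=
  epsilon (inhabits (hzero H)) (fun p => V p /\ orth V (hsub x p)).

Definition obproj (V1 V2 : H -> Prop) (x : H) : H :=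
  epsilon (inhabits (hzero H)) (fun p => V1 p /\ V2 (hsub x p)).

Definition range (T : H -> H) : H -> Prop := fun y => exists x, y = T x.

Definition is_glb (E : R -> Prop) (m : R) : Prop :=
  (forall x, E x -> m <= x) /\ (forall b, (forall x, E x -> b <= x) -> b <= m).

Definition Rsup (E : R -> Prop) : R := epsilon (inhabits 0) (fun m => is_lub E m).
Definition Rinf (E : R -> Prop) : R := epsilon (inhabits 0) (fun m => is_glb E m).

Definition cos_angle (V1 V2 : H -> Prop) : R :=
  Rinf (fun r => exists x, V1 x /\ x <> hzero H /\ r = hnorm (oproj V2 x) / hnorm x).

Definition sin_angle (V1 V2 : H -> Prop) : R :=
  Rsup (fun r => exists x, V1 x /\ x <> hzero H /\
                  r = hnorm (oproj (orth V2) x) / hnorm x).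

End Hilb.

(* Main.v *)
Require Import Defs.
From Stdlib Require Import Reals Lra Lia Psatz ClassicalEpsilon Classical.
Open Scope R_scope.

Section Basic.
Context {H : RHilbert}.
Local Notation ip := (hinner H).

Lemma ipDl x y z : ip (hadd H x y) z = ip x z + ip y z.
Proof. apply hinnerD. Qed.
Lemma ipZl a x z : ip (hscal H a x) z = a * ip x z.
Proof. apply hinnerZ. Qed.
Lemma ip0l z : ip (hzero H) z = 0.
Proof.
  pose proof (hinnerD H (hzero H) (hzero H) z) as E. rewrite hadd0 in E. lra.
Qed.
Lemma ipNl x z : ip (hopp H x) z = - ip x z.
Proof.
  pose proof (hinnerD H (hopp H x) x z) as E. rewrite haddN, ip0l in E. lra.
Qed.
Lemma ipBl x y z : ip (hsub x y) z = ip x z - ip y z.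
Proof. unfold hsub. rewrite ipDl, ipNl. ring. Qed.
Lemma ipDr x y z : ip z (hadd H x y) = ip z x + ip z y.
Proof. rewrite !(hinner_sym H z). apply ipDl. Qed.
Lemma ipZr a x z : ip z (hscal H a x) = a * ip z x.
Proof. rewrite !(hinner_sym H z). apply ipZl. Qed.
Lemma ip0r z : ip z (hzero H) = 0.
Proof. rewrite hinner_sym. apply ip0l. Qed.
Lemma ipNr x z : ip z (hopp H x) = - ip z x.
Proof. rewrite !(hinner_sym H z). apply ipNl. Qed.
Lemma ipBr x y z : ip z (hsub x y) = ip z x - ip z y.
Proof. rewrite !(hinner_sym H z). apply ipBl. Qed.

Lemma vec_ext (u v : H) : (forall z, ip u z = ip v z) -> u = v.
Proof.
  intro E. assert (ip (hsub u v) (hsub u v) = 0) as E2.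
  { rewrite ipBl, !E. ring. }
  apply hinner_def in E2. unfold hsub in E2.
  transitivity (hadd H (hadd H u (hopp H v)) v).
  - rewrite <- haddA, haddN, haddC, hadd0. reflexivity.
  - rewrite E2, hadd0. reflexivity.
Qed.

Lemma ip_pos (x : H) : 0 <= ip x x.
Proof. apply hinner_pos. Qed.

Lemma norm_sq (x : H) : hnorm x ^ 2 = ip x x.
Proof. unfold hnorm. apply pow2_sqrt, ip_pos. Qed.
Lemma norm_ge0 (x : H) : 0 <= hnorm x.
Proof. unfold hnorm. apply sqrt_pos. Qed.
Lemma norm_eq0 (x : H) : hnorm x = 0 -> x = hzero H.
Proof. intro E. apply hinner_def. rewrite <- norm_sq, E. ring. Qed.
Lemma norm0 : hnorm (hzero H) = 0.
Proof. unfold hnorm. rewrite ip0l. apply sqrt_0. Qed.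
Lemma ip_pos_nz (x : H) : x <> hzero H -> 0 < ip x x.
Proof.
  intro Hx. destruct (ip_pos x) as [h|h]; auto. exfalso. apply Hx, hinner_def. auto.
Qed.
Lemma norm_pos (x : H) : x <> hzero H -> 0 < hnorm x.
Proof. intro Hx. unfold hnorm. apply sqrt_lt_R0, ip_pos_nz, Hx. Qed.

Lemma cs_sq (x : H) (y : H) : ip x y ^ 2 <= ip x x * ip y y.
Proof.
  destruct (classic (y = hzero H)) as [->|Hy].
  { rewrite ip0r, ip0l. nra. }
  pose proof (ip_pos_nz y Hy) as Py.
  set (t := ip x y / ip y y).
  pose proof (ip_pos (hsub x (hscal H t y))) as P.
  rewrite ipBl, !ipBr, !ipZl, !ipZr, (hinner_sym H y x) in P.
  unfold t in P. 
  assert (ip x x - ip x y * ip x y / ip y y >= 0) as Q.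
  { replace (ip x x - ip x y * ip x y / ip y y) with
      (ip x x - ip x y / ip y y * ip x y -
       (ip x y / ip y y * ip x y - ip x y / ip y y * (ip x y / ip y y * ip y y))) by (field; lra).
    lra. }
  assert (ip x y * ip x y / ip y y * ip y y = ip x y * ip x y) by (field; lra).
  assert (0 <= (ip x x - ip x y * ip x y / ip y y) * ip y y) by (apply Rmult_le_pos; lra).
  nra.
Qed.

Lemma cs (x : H) (y : H) : Rabs (ip x y) <= hnorm x * hnorm y.
Proof.
  assert (ip x y ^2 <= (hnorm x * hnorm y)^2) by (rewrite Rpow_mult_distr, !norm_sq; apply cs_sq).
  assert (0 <= hnorm x * hnorm y) by (apply Rmult_le_pos; apply norm_ge0).
  apply Rabs_le; split; nra.
Qed.

Lemma cs' (x : H) (y : H) : ip x y <= hnorm x * hnorm y.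
Proof. pose proof (cs x y). pose proof (Rle_abs (ip x y)). lra. Qed.

Lemma norm_triangle (x : H) (y : H) : hnorm (hadd H x y) <= hnorm x + hnorm y.
Proof.
  apply Rsqr_incr_0_var; [|pose proof (norm_ge0 x); pose proof (norm_ge0 y); lra].
  unfold Rsqr. replace (hnorm (hadd H x y) * hnorm (hadd H x y)) with (hnorm (hadd H x y) ^2) by ring.
  rewrite norm_sq, ipDl, !ipDr.
  pose proof (cs' x y). rewrite (hinner_sym H y x).
  replace ((hnorm x + hnorm y) * (hnorm x + hnorm y)) with (hnorm x ^2 + hnorm y^2 + 2 * (hnorm x * hnorm y)) by ring.
  rewrite !norm_sq. lra.
Qed.

Lemma norm_scal (a : R) (x : H) : hnorm (hscal H a x) = Rabs a * hnorm x.
Proof.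
  unfold hnorm. rewrite ipZl, ipZr, <- Rmult_assoc, sqrt_mult_alt.
  - f_equal. apply sqrt_Rsqr_abs.
  - nra.
Qed.

Lemma hsub_diag (x : H) : hsub x x = hzero H.
Proof. apply vec_ext. intro z. rewrite ipBl, ip0l. ring. Qed.

Lemma norm_sub_sym (x : H) (y : H) : hnorm (hsub x y) = hnorm (hsub y x).
Proof. unfold hnorm. f_equal. rewrite !ipBl, !ipBr. rewrite (hinner_sym H x y). ring. Qed.

Lemma norm_sub_tri (x : H) (y : H) (z : H) : hnorm (hsub x z) <= hnorm (hsub x y) + hnorm (hsub y z).
Proof.
  replace (hsub x z) with (hadd H (hsub x y) (hsub y z)). apply norm_triangle.
  apply vec_ext; intro w. rewrite ipDl, !ipBl. ring.
Qed.

End Basic.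

Lemma inv_small (eps : R) : 0 < eps -> exists N : nat, forall n, (N <= n)%nat -> / (INR n + 1) < eps.
Proof.
  intro He. destruct (INR_archimed eps 1 He) as [N HN]. exists N. intros n Hn.
  apply le_INR in Hn. pose proof (pos_INR N).
  apply Rmult_lt_reg_r with (INR n + 1); [lra|].
  rewrite Rinv_l by lra. nra.
Qed.

Lemma inv_pos_nat (n : nat) : 0 < / (INR n + 1).
Proof. apply Rinv_0_lt_compat. pose proof (pos_INR n). lra. Qed.

Lemma choice_nat {T : Type} (d : T) (P : nat -> T -> Prop) :
  (forall n, exists v, P n v) -> exists f : nat -> T, forall n, P n (f n).
Proof.
  intro Hn. exists (fun n => epsilon (inhabits d) (P n)). intro n. apply epsilon_spec, Hn.
Qed.

Lemma glb_exists (E : R -> Prop) (m0 : R) :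
  (exists x, E x) -> (forall x, E x -> m0 <= x) -> exists m, is_glb E m.
Proof.
  intros [x0 Hx0] Hlb.
  destruct (completeness (fun y => E (- y))) as [m [Hm1 Hm2]].
  - exists (- m0). intros y Hy. specialize (Hlb _ Hy). lra.
  - exists (- x0). rewrite Ropp_involutive. auto.
  - exists (- m). split.
    + intros x Hx. assert (- x <= m) by (apply Hm1; rewrite Ropp_involutive; auto). lra.
    + intros b Hb. assert (m <= - b). { apply Hm2. intros y Hy. specialize (Hb _ Hy). lra. } lra.
Qed.

Lemma lub_unique E m1 m2 : is_lub E m1 -> is_lub E m2 -> m1 = m2.
Proof.
  intros [A1 B1] [A2 B2]. apply Rle_antisym; [apply B1; auto | apply B2; auto].
Qed.
Lemma glb_unique E m1 m2 : is_glb E m1 -> is_glb E m2 -> m1 = m2.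
Proof.
  intros [A1 B1] [A2 B2]. apply Rle_antisym; [apply B2; auto | apply B1; auto].
Qed.
Lemma Rsup_eq E m : is_lub E m -> Rsup E = m.
Proof.
  intro Hm. unfold Rsup. apply lub_unique with E; auto.
  apply epsilon_spec. eauto.
Qed.
Lemma Rinf_eq E m : is_glb E m -> Rinf E = m.
Proof.
  intro Hm. unfold Rinf. apply glb_unique with E; auto.
  apply epsilon_spec. eauto.
Qed.

Global Hint Rewrite @ipBl @ipBr @ipZl @ipZr @ipDl @ipDr @ipNl @ipNr @ip0l @ip0r : ipdb.

Section Conv.
Context {H : RHilbert}.
Local Notation ip := (hinner H).

Lemma cauchy_conv (u : nat -> H) :
  (forall eps, 0 < eps -> exists N, forall m n, (N <= m)%nat -> (N <= n)%nat ->
     hnorm (hsub (u m) (u n)) < eps) -> exists l, converges u l.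
Proof. intro C. exact (hcomplete H u C). Qed.

Lemma conv_unique (u : nat -> H) l1 l2 : converges u l1 -> converges u l2 -> l1 = l2.
Proof.
  intros C1 C2.
  destruct (classic (l1 = l2)) as [E|NE]; auto. exfalso.
  pose proof (norm_pos (hsub l1 l2)) as P.
  assert (hsub l1 l2 <> hzero H) as NZ.
  { intro E. apply NE. apply vec_ext. intro z. 
    assert (ip (hsub l1 l2) z = 0) as E2 by (rewrite E; apply ip0l).
    rewrite ipBl in E2. lra. }
  specialize (P NZ). set (e := hnorm (hsub l1 l2)) in *.
  assert (He2 : 0 < e/2) by lra. destruct (C1 (e/2) He2) as [N1 H1]. destruct (C2 (e/2) He2) as [N2 H2].
  specialize (H1 (max N1 N2) (Nat.le_max_l _ _)). specialize (H2 (max N1 N2) (Nat.le_max_r _ _)).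
  pose proof (norm_sub_tri l1 (u (max N1 N2)) l2). rewrite (norm_sub_sym (u (max N1 N2)) l1) in H1. unfold e in *. lra.
Qed.

Lemma conv_sq_le (u : nat -> H) l x c :
  converges u l -> 0 <= c ->
  (forall n, ip (hsub x (u n)) (hsub x (u n)) <= c + / (INR n + 1)) ->
  ip (hsub x l) (hsub x l) <= c.
Proof.
  intros Cv Hc Hb. apply Rnot_lt_le. intro Hlt.
  set (g := ip (hsub x l) (hsub x l) - c).
  assert (0 < g) by (unfold g; lra).
  set (d := Rmin 1 (g / (2 * (2 * c + 5)))).
  assert (0 < d) by (unfold d; apply Rmin_pos; [lra| apply Rdiv_lt_0_compat; lra]).
  assert (d <= 1) by apply Rmin_l.
  assert (d * (2 * c + 5) <= g / 2).
  { unfold d. pose proof (Rmin_r 1 (g / (2 * (2 * c + 5)))).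
    apply Rle_trans with (g / (2 * (2 * c + 5)) * (2 * c + 5)).
    apply Rmult_le_compat_r; lra. right. field. lra. }
  destruct (Cv d H1) as [N1 HN1]. assert (Hg2 : 0 < g/2) by lra. destruct (inv_small (g/2) Hg2) as [N2 HN2].
  set (n := max N1 N2).
  specialize (HN1 n (Nat.le_max_l _ _)). specialize (HN2 n (Nat.le_max_r _ _)).
  specialize (Hb n).
  pose proof (norm_sub_tri x (u n) l) as T.
  set (a := hnorm (hsub x (u n))) in *. set (L := hnorm (hsub x l)) in *.
  set (dd := hnorm (hsub (u n) l)) in *.
  assert (a ^ 2 = ip (hsub x (u n)) (hsub x (u n))) by apply norm_sq.
  assert (L ^ 2 = ip (hsub x l) (hsub x l)) by apply norm_sq.
  assert (0 <= a) by apply norm_ge0. assert (0 <= dd) by apply norm_ge0.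
  assert (0 <= L) by apply norm_ge0.
  pose proof (inv_pos_nat n).
  assert (/ (INR n + 1) <= 1).
  { rewrite <- Rinv_1. apply Rinv_le_contravar; [lra|]. pose proof (pos_INR n). lra. }
  assert (Eg : g = ip (hsub x l) (hsub x l) - c) by reflexivity.
  clearbody a L dd d g n.
  assert (a <= c + 2) by nra.
  assert (L ^ 2 <= (a + dd) ^ 2) by (apply pow_incr; lra).
  assert (2 * a + dd <= 2 * c + 5) by lra.
  assert (dd * (2 * a + dd) <= d * (2 * c + 5)).
  { apply Rmult_le_compat; lra. }
  assert ((a + dd)^2 = a^2 + dd * (2 * a + dd)) by ring.
  lra.
Qed.

Lemma ip_sub_scal (y w : H) t :
  ip (hsub y (hscal H t w)) (hsub y (hscal H t w)) = ip y y - 2 * t * ip y w + t * t * ip w w.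
Proof. autorewrite with ipdb. rewrite (hinner_sym H w y). ring. Qed.

Lemma proj_exists (V : H -> Prop) : closed_subspace V ->
  forall x, exists p, V p /\ orth V (hsub x p).
Proof.
  intros CV x. destruct CV as [V0 [VD [VZ VC]]].
  set (E := fun r => exists v, V v /\ r = ip (hsub x v) (hsub x v)).
  destruct (glb_exists E 0) as [d [Hd1 Hd2]].
  { exists (ip (hsub x (hzero H)) (hsub x (hzero H))). exists (hzero H). auto. }
  { intros r [v [_ ->]]. apply ip_pos. }
  assert (0 <= d) as d0.
  { apply Hd2. intros r [v [_ ->]]. apply ip_pos. }
  assert (forall n : nat, exists v, V v /\ ip (hsub x v) (hsub x v) <= d + / (INR n + 1)) as Hmin.
  { intro n. apply NNPP. intro Hn. pose proof (inv_pos_nat n).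
    assert (d + / (INR n + 1) <= d); [|lra].
    apply Hd2. intros r [v [Vv ->]]. apply Rnot_lt_le. intro Hl. apply Hn. exists v. split; auto. lra. }
  destruct (choice_nat (hzero H) _ Hmin) as [v Hv].
  assert (forall n m, ip (hsub (v n) (v m)) (hsub (v n) (v m)) <= 2 * / (INR n + 1) + 2 * / (INR m + 1)) as Par.
  { intros n m. destruct (Hv n) as [Vn Hn]. destruct (Hv m) as [Vm Hm].
    set (mid := hscal H (1/2) (hadd H (v n) (v m))).
    assert (V mid) as Vmid by (apply VZ, VD; auto).
    assert (d <= ip (hsub x mid) (hsub x mid)) by (apply Hd1; exists mid; auto).
    unfold mid in *. 
    autorewrite with ipdb in *.
    rewrite (hinner_sym H (v n) x), (hinner_sym H (v m) x), (hinner_sym H (v m) (v n)) in *.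
    lra. }
  destruct (cauchy_conv v) as [p Cp].
  { intros eps Heps. assert (He4 : 0 < eps ^ 2 / 4) by (apply Rdiv_lt_0_compat; [nra| lra]).
    destruct (inv_small (eps ^ 2 / 4) He4) as [N HN].
    exists N. intros m n Hm Hn. specialize (Par m n). specialize (HN m Hm) as A1.
    specialize (HN n Hn) as A2. rewrite <- norm_sq in Par. pose proof (norm_ge0 (hsub (v m) (v n))). nra. }
  assert (V p) as Vp by (apply (VC v p); auto; intro n; apply Hv).
  assert (ip (hsub x p) (hsub x p) <= d) as Hp.
  { apply (conv_sq_le v); auto. intro n. apply Hv. }
  exists p. split; auto. intros w Vw.
  set (c := ip (hsub x p) w). set (q := ip w w).
  assert (0 <= q) by apply ip_pos.
  set (t := c / (q + 1)).
  assert (d <= ip (hsub (hsub x p) (hscal H t w)) (hsub (hsub x p) (hscal H t w))) as Hd.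
  { apply Hd1. exists (hadd H p (hscal H t w)). split. apply VD; auto.
    f_equal; apply vec_ext; intro z; autorewrite with ipdb; ring. }
  rewrite ip_sub_scal in Hd. fold c q in Hd.
  assert (t * t * q - 2 * t * c >= 0) as Ht by lra.
  unfold t in Ht.
  assert (c / (q + 1) * (c / (q + 1)) * q - 2 * (c / (q + 1)) * c = c * c * (- q - 2) / ((q+1) * (q + 1))) as Eq by (field; lra).
  rewrite Eq in Ht.
  assert (c * c * (- q - 2) >= 0).
  { assert (0 < (q+1)*(q+1)) by nra.
    apply Rle_ge. apply Rge_le in Ht.
    replace (c * c * (- q - 2)) with (c * c * (- q - 2) / ((q+1)*(q+1)) * ((q+1)*(q+1))) by (field; lra).
    apply Rmult_le_pos; lra. }
  nra.
Qed.

End Conv.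

Section Proj.
Context {H : RHilbert}.
Local Notation ip := (hinner H).

Lemma hopp_scal (b : H) : hopp H b = hscal H (-1) b.
Proof. apply vec_ext; intro z. autorewrite with ipdb. ring. Qed.

Lemma cs_sub (V : H -> Prop) : closed_subspace V -> forall a b, V a -> V b -> V (hsub a b).
Proof.
  intros [V0 [VD [VZ _]]] a b Ha Hb. unfold hsub. apply VD; auto. rewrite hopp_scal. auto.
Qed.

Lemma orth_add (V : H -> Prop) a b : orth V a -> orth V b -> orth V (hadd H a b).
Proof. intros Ha Hb v Hv. rewrite ipDl, Ha, Hb; auto. ring. Qed.
Lemma orth_scal (V : H -> Prop) c a : orth V a -> orth V (hscal H c a).
Proof. intros Ha v Hv. rewrite ipZl, Ha; auto. ring. Qed.
Lemma orth_sub (V : H -> Prop) a b : orth V a -> orth V b -> orth V (hsub a b).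
Proof. intros Ha Hb v Hv. rewrite ipBl, Ha, Hb; auto. ring. Qed.
Lemma orth_zero (V : H -> Prop) : orth V (hzero H).
Proof. intros v _. apply ip0l. Qed.

Lemma oproj_spec (V : H -> Prop) x : (exists p, V p /\ orth V (hsub x p)) ->
  V (oproj V x) /\ orth V (hsub x (oproj V x)).
Proof. intro E. unfold oproj. apply (epsilon_spec (inhabits (hzero H)) (fun p => V p /\ orth V (hsub x p))). auto. Qed.

Lemma proj_unique (V : H -> Prop) x p1 p2 :
  (forall a b, V a -> V b -> V (hsub a b)) ->
  V p1 -> V p2 -> orth V (hsub x p1) -> orth V (hsub x p2) -> p1 = p2.
Proof.
  intros Vs V1 V2 O1 O2.
  assert (ip (hsub p1 p2) (hsub p1 p2) = 0) as E.
  { replace (hsub p1 p2) with (hsub (hsub x p2) (hsub x p1)) at 1.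
    - rewrite ipBl, O1, O2 by (apply Vs; auto). ring.
    - apply vec_ext; intro z. autorewrite with ipdb. ring. }
  apply hinner_def in E. apply vec_ext. intro z.
  assert (ip (hsub p1 p2) z = 0) as E2 by (rewrite E; apply ip0l). rewrite ipBl in E2. lra.
Qed.

Variable S : H -> Prop.
Hypothesis CS : closed_subspace S.

Definition Q x := oproj S x.

Lemma Q_spec x : S (Q x) /\ orth S (hsub x (Q x)).
Proof. apply oproj_spec. apply proj_exists. exact CS. Qed.
Lemma Q_in x : S (Q x). Proof. apply Q_spec. Qed.
Lemma Q_orth x : orth S (hsub x (Q x)). Proof. apply Q_spec. Qed.
Lemma Q_char x p : S p -> orth S (hsub x p) -> Q x = p.
Proof.
  intros Sp Op. apply (proj_unique S x); auto. apply cs_sub, CS. apply Q_in. apply Q_orth.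
Qed.
Lemma S0 : S (hzero H). Proof. apply CS. Qed.
Lemma SD a b : S a -> S b -> S (hadd H a b). Proof. apply CS. Qed.
Lemma SZ c a : S a -> S (hscal H c a). Proof. apply CS. Qed.
Lemma SB a b : S a -> S b -> S (hsub a b). Proof. apply cs_sub, CS. Qed.

Lemma orth_ip_S t s : orth S t -> S s -> ip s t = 0.
Proof. intros Ht Hs. rewrite hinner_sym. apply Ht, Hs. Qed.

Lemma Q_ip_l x y : ip (Q x) y = ip (Q x) (Q y).
Proof.
  assert (ip (Q x) (hsub y (Q y)) = 0) by (apply orth_ip_S; [apply Q_orth| apply Q_in]).
  rewrite ipBr in H0. lra.
Qed.
Lemma Q_sym x y : ip (Q x) y = ip x (Q y).
Proof.
  transitivity (ip (Q x) (Q y)); [apply Q_ip_l|].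
  rewrite (hinner_sym H x), (Q_ip_l y x), hinner_sym. reflexivity.
Qed.
Lemma Q_ip_r x y : ip x (Q y) = ip (Q x) (Q y).
Proof. rewrite <- Q_sym. apply Q_ip_l. Qed.

Lemma Q_add x y : Q (hadd H x y) = hadd H (Q x) (Q y).
Proof.
  apply Q_char. apply SD; apply Q_in.
  replace (hsub (hadd H x y) (hadd H (Q x) (Q y))) with (hadd H (hsub x (Q x)) (hsub y (Q y))).
  apply orth_add; apply Q_orth. apply vec_ext; intro z; autorewrite with ipdb; ring.
Qed.
Lemma Q_scal c x : Q (hscal H c x) = hscal H c (Q x).
Proof.
  apply Q_char. apply SZ; apply Q_in.
  replace (hsub (hscal H c x) (hscal H c (Q x))) with (hscal H c (hsub x (Q x))).
  apply orth_scal; apply Q_orth. apply vec_ext; intro z; autorewrite with ipdb; ring.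
Qed.
Lemma Q_sub x y : Q (hsub x y) = hsub (Q x) (Q y).
Proof.
  apply Q_char. apply SB; apply Q_in.
  replace (hsub (hsub x y) (hsub (Q x) (Q y))) with (hsub (hsub x (Q x)) (hsub y (Q y))).
  apply orth_sub; apply Q_orth. apply vec_ext; intro z; autorewrite with ipdb; ring.
Qed.
Lemma Q_id s : S s -> Q s = s.
Proof. intro Hs. apply Q_char; auto. rewrite hsub_diag. apply orth_zero. Qed.
Lemma Q_zero t : orth S t -> Q t = hzero H.
Proof.
  intro Ht. apply Q_char. apply S0.
  replace (hsub t (hzero H)) with t; auto. apply vec_ext; intro z; autorewrite with ipdb; ring.
Qed.
Lemma Q_zero_orth t : Q t = hzero H -> orth S t.
Proof.
  intro E. pose proof (Q_orth t) as O. rewrite E in O.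
  replace (hsub t (hzero H)) with t in O; auto. apply vec_ext; intro z; autorewrite with ipdb; ring.
Qed.
Lemma QQ x : Q (Q x) = Q x.
Proof. apply Q_id, Q_in. Qed.

Lemma pythag x : ip x x = ip (Q x) (Q x) + ip (hsub x (Q x)) (hsub x (Q x)).
Proof.
  autorewrite with ipdb. rewrite (Q_ip_l x x), (Q_ip_r x x). ring.
Qed.
Lemma ip_Q_IQ x y : ip (Q x) (hsub y (Q y)) = 0.
Proof. apply orth_ip_S; [apply Q_orth | apply Q_in]. Qed.

Lemma oprojC x : oproj (orth S) x = hsub x (Q x).
Proof.
  assert (orth (orth S) (hsub x (hsub x (Q x)))) as O.
  { intros t Ht. replace (hsub x (hsub x (Q x))) with (Q x).
    apply orth_ip_S; auto. apply Q_in.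
    apply vec_ext; intro z; autorewrite with ipdb; ring. }
  destruct (oproj_spec (orth S) x) as [O1 O2].
  { exists (hsub x (Q x)). split; auto. apply Q_orth. }
  apply (proj_unique (orth S) x); auto.
  - intros; apply orth_sub; auto.
  - apply Q_orth.
Qed.

Variable A : H -> Prop.
Hypothesis CA : closed_subspace A.
Hypothesis DS : direct_sum_whole A (orth S).

Definition P x := obproj A (orth S) x.

Lemma P_spec x : A (P x) /\ orth S (hsub x (P x)).
Proof.
  unfold P, obproj. apply (epsilon_spec (inhabits (hzero H)) (fun p => A p /\ orth S (hsub x p))).
  destruct DS as [_ D]. destruct (D x) as [a [b [Ha [Hb ->]]]]. exists a. split; auto.
  replace (hsub (hadd H a b) a) with b; auto. apply vec_ext; intro z; autorewrite with ipdb; ring.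
Qed.
Lemma P_in x : A (P x). Proof. apply P_spec. Qed.
Lemma P_rest x : orth S (hsub x (P x)). Proof. apply P_spec. Qed.
Lemma P_char x a : A a -> orth S (hsub x a) -> P x = a.
Proof.
  intros Ha Oa. destruct DS as [D0 _].
  assert (hsub a (P x) = hzero H) as E.
  { apply D0. apply cs_sub; auto. apply P_in.
    replace (hsub a (P x)) with (hsub (hsub x (P x)) (hsub x a)).
    apply orth_sub; auto. apply P_rest. apply vec_ext; intro z; autorewrite with ipdb; ring. }
  apply vec_ext; intro z. assert (ip (hsub a (P x)) z = 0) as E2 by (rewrite E; apply ip0l).
  rewrite ipBl in E2. lra.
Qed.
Lemma QP x : Q (P x) = Q x.
Proof.
  assert (Q (hsub x (P x)) = hzero H) as E by (apply Q_zero, P_rest).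
  rewrite Q_sub in E. apply vec_ext; intro z.
  assert (ip (hsub (Q x) (Q (P x))) z = 0) as E2 by (rewrite E; apply ip0l).
  rewrite ipBl in E2. lra.
Qed.

End Proj.

Lemma le_sqrt_of (y z : R) : 0 <= y -> y ^ 2 <= z -> y <= sqrt z.
Proof.
  intros Hy Hz. rewrite <- (sqrt_pow2 y Hy). apply sqrt_le_1_alt. simpl in *. lra.
Qed.
Lemma sqrt_le_of (y z : R) : 0 <= y -> z <= y ^ 2 -> sqrt z <= y.
Proof.
  intros Hy Hz. rewrite <- (sqrt_pow2 y Hy). apply sqrt_le_1_alt. simpl in *. lra.
Qed.
Lemma sq_le_of (a b : R) : 0 <= a -> a <= b -> a ^ 2 <= b ^ 2.
Proof. intros. apply pow_incr; lra. Qed.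
Lemma le_of_sq (a b : R) : 0 <= b -> a ^ 2 <= b ^ 2 -> a <= b.
Proof. intros Hb Hs. destruct (Rle_or_lt a b); auto. nra. Qed.

Section Angles.
Context {H : RHilbert}.
Local Notation ip := (hinner H).
Variable S : H -> Prop.
Hypothesis CS : closed_subspace S.
Local Notation Q := (Q S).

Definition rs (x : H) := hnorm (hsub x (Q x)) / hnorm x.
Definition rc (x : H) := hnorm (Q x) / hnorm x.

Lemma rs_sq x : x <> hzero H -> rs x ^ 2 = ip (hsub x (Q x)) (hsub x (Q x)) / ip x x.
Proof.
  intro Hx. pose proof (norm_pos x Hx). unfold rs. rewrite <- !norm_sq. field. lra.
Qed.
Lemma rc_sq x : x <> hzero H -> rc x ^ 2 = ip (Q x) (Q x) / ip x x.
Proof.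
  intro Hx. pose proof (norm_pos x Hx). unfold rc. rewrite <- !norm_sq. field. lra.
Qed.
Lemma rs_ge0 x : 0 <= rs x.
Proof.
  unfold rs. destruct (Req_dec (hnorm x) 0) as [E|E].
  - rewrite E. unfold Rdiv. rewrite Rinv_0. lra.
  - apply Rmult_le_pos; [apply norm_ge0|]. apply Rlt_le, Rinv_0_lt_compat. pose proof (norm_ge0 x). lra.
Qed.
Lemma rc_ge0 x : 0 <= rc x.
Proof.
  unfold rc. destruct (Req_dec (hnorm x) 0) as [E|E].
  - rewrite E. unfold Rdiv. rewrite Rinv_0. lra.
  - apply Rmult_le_pos; [apply norm_ge0|]. apply Rlt_le, Rinv_0_lt_compat. pose proof (norm_ge0 x). lra.
Qed.
Lemma rs_rc x : x <> hzero H -> rs x ^ 2 + rc x ^ 2 = 1.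
Proof.
  intro Hx. rewrite rs_sq, rc_sq by auto. pose proof (ip_pos_nz x Hx).
  rewrite (pythag S CS x). field. rewrite <- (pythag S CS x). lra.
Qed.
Lemma rs_le1 x : x <> hzero H -> rs x <= 1.
Proof. intro Hx. pose proof (rs_rc x Hx). pose proof (rc_ge0 x). pose proof (rs_ge0 x). nra. Qed.
Lemma rc_le1 x : x <> hzero H -> rc x <= 1.
Proof. intro Hx. pose proof (rs_rc x Hx). pose proof (rc_ge0 x). pose proof (rs_ge0 x). nra. Qed.
Lemma rc_of_rs x : x <> hzero H -> rc x = sqrt (1 - rs x ^ 2).
Proof.
  intro Hx. rewrite <- (rs_rc x Hx). replace (rs x ^ 2 + rc x ^ 2 - rs x ^ 2) with (rc x ^ 2) by ring.
  rewrite sqrt_pow2; auto. apply rc_ge0.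
Qed.

Definition sinset (V : H -> Prop) := fun r => exists x, V x /\ x <> hzero H /\
                  r = hnorm (oproj (orth S) x) / hnorm x.
Definition cosset (V : H -> Prop) := fun r => exists x, V x /\ x <> hzero H /\
                  r = hnorm (oproj S x) / hnorm x.

Lemma sinset_iff V r : sinset V r <-> exists x, V x /\ x <> hzero H /\ r = rs x.
Proof.
  unfold sinset, rs. split; intros [x [Vx [Nx E]]]; exists x; split; auto; split; auto;
  rewrite E, (oprojC S CS x); reflexivity.
Qed.

Section V.
Variable V : H -> Prop.
Hypothesis NV : nonzero_sub V.

Lemma ang_sin_lub : is_lub (sinset V) (sin_angle V S).
Proof.
  destruct (completeness (sinset V)) as [m Hm].
  - exists 1. intros r Hr. apply sinset_iff in Hr. destruct Hr as [x [_ [Nx ->]]]. apply rs_le1; auto.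
  - destruct NV as [x [Vx Nx]]. exists (rs x). apply sinset_iff. eauto.
  - replace (sin_angle V S) with m. exact Hm. symmetry. exact (Rsup_eq _ m Hm).
Qed.

Lemma ang_sin_ub x : V x -> x <> hzero H -> rs x <= sin_angle V S.
Proof. intros Vx Nx. apply ang_sin_lub. apply sinset_iff. eauto. Qed.
Lemma ang_sin_least M : (forall x, V x -> x <> hzero H -> rs x <= M) -> sin_angle V S <= M.
Proof. intro HM. apply ang_sin_lub. intros r Hr. apply sinset_iff in Hr. destruct Hr as [x [Vx [Nx ->]]]. auto. Qed.
Lemma ang_sin_range : 0 <= sin_angle V S <= 1.
Proof.
  destruct NV as [x [Vx Nx]]. split.
  - apply Rle_trans with (rs x). apply rs_ge0. apply ang_sin_ub; auto.
  - apply ang_sin_least. intros; apply rs_le1; auto.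
Qed.

Lemma ang_cos_glb : is_glb (cosset V) (sqrt (1 - sin_angle V S ^ 2)).
Proof.
  pose proof ang_sin_range as SR. set (s := sin_angle V S) in *.
  split.
  - intros r [x [Vx [Nx ->]]]. fold (Q x). fold (rc x). rewrite rc_of_rs by auto.
    apply sqrt_le_1_alt. pose proof (rs_ge0 x). assert (rs x <= s) by (apply ang_sin_ub; auto).
    assert (rs x ^ 2 <= s ^2) by (apply sq_le_of; auto). lra.
  - intros b Hb. destruct (Rle_or_lt b 0) as [Hb0|Hb0].
    { pose proof (sqrt_pos (1 - s^2)). lra. }
    destruct NV as [x0 [Vx0 Nx0]].
    assert (b <= rc x0) by (apply Hb; exists x0; auto).
    pose proof (rc_le1 x0 Nx0).
    assert (s <= sqrt (1 - b^2)).
    { apply ang_sin_least. intros x Vx Nx. assert (b <= rc x) by (apply Hb; exists x; auto).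
      apply le_sqrt_of. apply rs_ge0. pose proof (rs_rc x Nx).
      assert (b ^2 <= rc x ^2) by (apply sq_le_of; lra). lra. }
    assert (s ^ 2 <= 1 - b ^ 2).
    { rewrite <- (pow2_sqrt (1 - b^2)) by nra. apply sq_le_of; lra. }
    apply le_sqrt_of; lra.
Qed.

Lemma ang_cos_eq : cos_angle V S = sqrt (1 - sin_angle V S ^ 2).
Proof. unfold cos_angle. apply Rinf_eq. apply ang_cos_glb. Qed.

Lemma ang_sin_cos : sin_angle V S ^ 2 + cos_angle V S ^ 2 = 1.
Proof. rewrite ang_cos_eq. pose proof ang_sin_range. rewrite pow2_sqrt by nra. ring. Qed.
Lemma ang_cos_range : 0 <= cos_angle V S <= 1.
Proof. pose proof ang_sin_cos. pose proof ang_sin_range. rewrite ang_cos_eq. split. apply sqrt_pos.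
  apply sqrt_le_of; nra. Qed.
Lemma ang_cos_lb x : V x -> x <> hzero H -> cos_angle V S <= rc x.
Proof. intros. rewrite ang_cos_eq. apply ang_cos_glb. exists x; auto. Qed.
Lemma ang_cos_greatest m : (forall x, V x -> x <> hzero H -> m <= rc x) -> m <= cos_angle V S.
Proof. intros Hm. rewrite ang_cos_eq. apply ang_cos_glb. intros r [x [Vx [Nx ->]]]. apply Hm; auto. Qed.

End V.
End Angles.

Section Baire.
Context {H : RHilbert}.
Local Notation ip := (hinner H).
Variable K : nat -> H -> Prop.
Hypothesis Kopen : forall n z, ~ K n z -> exists eps, 0 < eps /\
   forall y, hnorm (hsub y z) < eps -> ~ K n y.
Hypothesis Kcover : forall x, exists n, K n x.

Definition Step (k : nat) (p q : H * R) : Prop :=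
  0 < snd q /\ snd q < snd p /\ snd q <= / (INR k + 2) /\
  forall y, hnorm (hsub y (fst q)) <= snd q -> hnorm (hsub y (fst p)) < snd p /\ ~ K k y.

Hypothesis NB : forall n x0 r, 0 < r -> exists y, hnorm (hsub y x0) < r /\ ~ K n y.

Lemma step_ex k p : 0 < snd p -> exists q, Step k p q.
Proof.
  destruct p as [x r]. simpl. intro Hr.
  assert (Hr2 : 0 < r / 2) by lra.
  destruct (NB k x (r/2) Hr2) as [z [Hz Kz]].
  destruct (Kopen k z Kz) as [eps [He Hy]].
  assert (0 < / (INR k + 2)) by (apply Rinv_0_lt_compat; pose proof (pos_INR k); lra).
  set (r' := Rmin eps (Rmin (r/2) (/ (INR k + 2))) / 2).
  assert (Rmin eps (Rmin (r/2) (/ (INR k + 2))) <= eps) by apply Rmin_l.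
  assert (Rmin eps (Rmin (r/2) (/ (INR k + 2))) <= Rmin (r/2) (/ (INR k + 2))) by apply Rmin_r.
  assert (Rmin (r/2) (/ (INR k + 2)) <= r/2) by apply Rmin_l.
  assert (Rmin (r/2) (/ (INR k + 2)) <= / (INR k + 2)) by apply Rmin_r.
  assert (0 < Rmin eps (Rmin (r/2) (/ (INR k + 2)))) by (repeat apply Rmin_pos; lra).
  exists (z, r'). unfold Step; simpl. unfold r'.
  split; [lra|]. split; [lra|]. split; [lra|].
  intros y Hyz. split.
  - pose proof (norm_sub_tri y z x). lra.
  - apply Hy. lra.
Qed.

Definition stepF (k : nat) (p : H * R) : H * R :=
  epsilon (inhabits (hzero H, 1)) (Step k p).

Fixpoint bseq (n : nat) : H * R :=
  match n with
  | O => (hzero H, 1)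
  | Datatypes.S m => stepF m (bseq m)
  end.

Lemma bseq_pos n : 0 < snd (bseq n).
Proof.
  induction n as [|n IH]. simpl; lra.
  simpl. unfold stepF. pose proof (epsilon_spec (inhabits (hzero H, 1)) (Step n (bseq n)) (step_ex n _ IH)) as [E _].
  exact E.
Qed.
Lemma bseq_step n : Step n (bseq n) (bseq (Datatypes.S n)).
Proof.
  simpl. unfold stepF. apply epsilon_spec. apply step_ex, bseq_pos.
Qed.

Lemma bseq_nest m d y : hnorm (hsub y (fst (bseq (m + d)))) <= snd (bseq (m + d)) ->
  hnorm (hsub y (fst (bseq m))) <= snd (bseq m).
Proof.
  revert y. induction d as [|d IH]; intros y Hy.
  - rewrite Nat.add_0_r in Hy. exact Hy.
  - apply IH. rewrite Nat.add_succ_r in Hy. destruct (bseq_step (m + d)) as [_ [_ [_ Hs]]].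
    apply Rlt_le. apply (Hs y Hy).
Qed.

Lemma bseq_r_small n : snd (bseq (Datatypes.S n)) <= / (INR (Datatypes.S n) + 1).
Proof.
  destruct (bseq_step n) as [_ [_ [E _]]]. rewrite S_INR.
  replace (INR n + 1 + 1) with (INR n + 2) by ring. exact E.
Qed.

Lemma bseq_close m j : (m <= j)%nat -> hnorm (hsub (fst (bseq j)) (fst (bseq m))) <= snd (bseq m).
Proof.
  intro Hmj. replace j with (m + (j - m))%nat by lia. apply (bseq_nest m (j - m)).
  rewrite hsub_diag, norm0. apply Rlt_le, bseq_pos.
Qed.

Lemma baire_false : False.
Proof.
  set (x := fun n => fst (bseq n)).
  destruct (cauchy_conv x) as [l Hl].
  { intros eps He. assert (He2 : 0 < eps / 2) by lra.
    destruct (inv_small (eps/2) He2) as [N HN].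
    exists (Datatypes.S N). intros m n Hm Hn.
    pose proof (bseq_close (Datatypes.S N) m Hm) as A1. pose proof (bseq_close (Datatypes.S N) n Hn) as A2.
    pose proof (bseq_r_small N) as A3. specialize (HN (Datatypes.S N) (Nat.le_succ_diag_r N)).
    pose proof (norm_sub_tri (x m) (fst (bseq (Datatypes.S N))) (x n)) as A4.
    unfold x in *. rewrite (norm_sub_sym (fst (bseq (Datatypes.S N))) (fst (bseq n))) in A4.
    lra. }
  destruct (Kcover l) as [k Kl].
  assert (hnorm (hsub l (fst (bseq (Datatypes.S k)))) <= snd (bseq (Datatypes.S k))) as Hb.
  { apply Rnot_lt_le. intro Hlt.
    set (g := hnorm (hsub l (fst (bseq (Datatypes.S k)))) - snd (bseq (Datatypes.S k))).
    assert (Hg : 0 < g) by (unfold g; lra).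
    destruct (Hl g Hg) as [N HN].
    set (j := max N (Datatypes.S k)).
    specialize (HN j (Nat.le_max_l _ _)).
    pose proof (bseq_close (Datatypes.S k) j (Nat.le_max_r _ _)).
    pose proof (norm_sub_tri l (x j) (fst (bseq (Datatypes.S k)))) as A4.
    unfold x, g in *. rewrite (norm_sub_sym l (fst (bseq j))) in A4. lra. }
  destruct (bseq_step k) as [_ [_ [_ Hs]]]. apply (Hs l Hb). exact Kl.
Qed.

End Baire.

Lemma baire {H : RHilbert} (K : nat -> H -> Prop) :
  (forall n z, ~ K n z -> exists eps, 0 < eps /\ forall y, hnorm (hsub y z) < eps -> ~ K n y) ->
  (forall x, exists n, K n x) ->
  exists n x0 r, 0 < r /\ forall y, hnorm (hsub y x0) < r -> K n y.
Proof.
  intros Ko Kc. apply NNPP. intro NE. apply (baire_false K Ko Kc).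
  intros n x0 r Hr. apply NNPP. intro NE2. apply NE. exists n, x0, r. split; auto.
  intros y Hy. apply NNPP. intro Ky. apply NE2. exists y. auto.
Qed.

Section CApos.
Context {H : RHilbert}.
Local Notation ip := (hinner H).

Lemma Q_norm_le (V : H -> Prop) (CV : closed_subspace V) x : hnorm (Q V x) <= hnorm x.
Proof.
  apply le_of_sq. apply norm_ge0. rewrite !norm_sq, (pythag V CV x).
  pose proof (ip_pos (hsub x (Q V x))). lra.
Qed.

Lemma conv_cauchy (u : nat -> H) l : converges u l ->
  forall eps, 0 < eps -> exists N, forall m n, (N <= m)%nat -> (N <= n)%nat ->
     hnorm (hsub (u m) (u n)) < eps.
Proof.
  intros C eps He. assert (He2 : 0 < eps/2) by lra. destruct (C _ He2) as [N HN].
  exists N. intros m n Hm Hn. pose proof (HN m Hm). pose proof (HN n Hn).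
  pose proof (norm_sub_tri (u m) l (u n)). rewrite (norm_sub_sym l (u n)) in H2. lra.
Qed.

Variables S A : H -> Prop.
Hypothesis CS : closed_subspace S.
Hypothesis CA : closed_subspace A.
Hypothesis DS : direct_sum_whole A (orth S).

Lemma QA_bound : exists d, 0 < d /\ forall w, S w -> d * hnorm w <= hnorm (Q A w).
Proof.
  set (K := fun (n : nat) x => forall w, S w -> Rabs (ip x w) <= INR n * hnorm (Q A w)).
  destruct (baire K) as [n [x0 [r [Hr Hball]]]].
  - intros n z Kz. unfold K in Kz. apply not_all_ex_not in Kz. destruct Kz as [w Hw].
    apply imply_to_and in Hw. destruct Hw as [Sw Hw]. apply Rnot_le_lt in Hw.
    pose proof (norm_ge0 w).
    set (g := Rabs (ip z w) - INR n * hnorm (Q A w)).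
    exists (g / (hnorm w + 1)). split. apply Rdiv_lt_0_compat; unfold g; lra.
    intros y Hy Ky. specialize (Ky w Sw).
    pose proof (cs (hsub y z) w) as C. rewrite ipBl in C.
    assert (hnorm (hsub y z) * hnorm w <= g / (hnorm w + 1) * hnorm w) by (apply Rmult_le_compat_r; lra).
    assert (g / (hnorm w + 1) * hnorm w < g).
    { assert (0 < g) by (unfold g; lra).
      apply Rlt_le_trans with (g / (hnorm w + 1) * (hnorm w + 1)).
      apply Rmult_lt_compat_l. apply Rdiv_lt_0_compat; lra. lra. right; field; lra. }
    pose proof (Rabs_triang_inv (ip z w) (ip y w)).
    rewrite Rabs_minus_sym in C. unfold g in *. lra.
  - intro x. set (p := P S A x).
    destruct (INR_archimed 1 (hnorm p) Rlt_0_1) as [n Hn]. exists n. intros w Sw.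
    assert (ip x w = ip p (Q A w)) as E.
    { assert (ip (hsub x p) w = 0) by (apply (P_rest S A DS x); auto).
      rewrite ipBl in H0.
      assert (Q A p = p) by (apply (Q_id A CA), P_in; auto).
      rewrite (Q_ip_r A CA p w), <- (Q_ip_l A CA p w), H1. lra. }
    rewrite E. apply Rle_trans with (hnorm p * hnorm (Q A w)). apply cs.
    apply Rmult_le_compat_r. apply norm_ge0. lra.
  - exists (r / (4 * (INR n + 1))). split.
    { apply Rdiv_lt_0_compat; [lra|]. pose proof (pos_INR n). lra. }
    intros w Sw. destruct (classic (w = hzero H)) as [->|Nw].
    { rewrite norm0. pose proof (norm_ge0 (Q A (hzero H))). lra. }
    pose proof (norm_pos w Nw) as Pw.
    set (y := hadd H x0 (hscal H (r / 2 / hnorm w) w)).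
    assert (K n y) as Ky.
    { apply Hball. replace (hsub y x0) with (hscal H (r / 2 / hnorm w) w).
      rewrite norm_scal, Rabs_right. field_simplify; lra. apply Rle_ge, Rlt_le, Rdiv_lt_0_compat; lra.
      apply vec_ext; intro z; unfold y; autorewrite with ipdb; ring. }
    assert (K n x0) as K0. { apply Hball. rewrite hsub_diag, norm0. lra. }
    specialize (Ky w Sw). specialize (K0 w Sw).
    assert (ip y w = ip x0 w + r / 2 * hnorm w) as E.
    { unfold y. autorewrite with ipdb. rewrite <- norm_sq. field. lra. }
    rewrite E in Ky.
    pose proof (Rle_abs (ip x0 w + r/2*hnorm w)) as T1.
    pose proof (Rabs_Ropp (ip x0 w)) as T2. pose proof (Rle_abs (- ip x0 w)) as T3.
    assert (r / 2 * hnorm w <= 2 * (INR n * hnorm (Q A w))) as T4 by lra.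
    pose proof (norm_ge0 (Q A w)). pose proof (pos_INR n).
    apply Rmult_le_reg_r with (4 * (INR n + 1)). lra.
    replace (r / (4 * (INR n + 1)) * hnorm w * (4 * (INR n + 1))) with (r * hnorm w) by (field; lra).
    nra.
Qed.


Lemma range_closed d : 0 < d -> (forall w, S w -> d * hnorm w <= hnorm (Q A w)) ->
  closed_subspace (fun a => exists w, S w /\ a = Q A w).
Proof.
  intros Hd Hb. destruct CS as [S0 [SD [SZ SC]]].
  split; [|split; [|split]].
  - exists (hzero H). split; auto. symmetry. apply (Q_zero A CA). apply orth_zero.
  - intros x y [w1 [S1 ->]] [w2 [S2 ->]]. exists (hadd H w1 w2). split; auto. symmetry. apply (Q_add A CA).
  - intros c x [w [Sw ->]]. exists (hscal H c w). split; auto. symmetry. apply (Q_scal A CA).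
  - intros u l Hu Cu.
    destruct (choice_nat (hzero H) (fun n w => S w /\ u n = Q A w) Hu) as [w Hw].
    destruct (cauchy_conv w) as [ws Cw].
    { intros eps He. assert (Hde : 0 < d * eps) by nra.
      destruct (conv_cauchy u l Cu _ Hde) as [N HN]. exists N. intros m n Hm Hn.
      specialize (HN m n Hm Hn). destruct (Hw m) as [Sm Em]. destruct (Hw n) as [Sn En].
      rewrite Em, En, <- (Q_sub A CA) in HN.
      assert (S (hsub (w m) (w n))) as Smn by (apply cs_sub; [split; auto|auto|auto]).
      specialize (Hb _ Smn). nra. }
    assert (S ws) as Sws by (apply (SC w ws); auto; intro n; apply Hw).
    exists ws. split; auto. apply (conv_unique u); auto.
    intros eps He. destruct (Cw eps He) as [N HN]. exists N. intros n Hn.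
    destruct (Hw n) as [_ ->]. rewrite <- (Q_sub A CA). eapply Rle_lt_trans.
    apply (Q_norm_le A CA). auto.
Qed.

Lemma cA_bound : exists d, 0 < d /\ forall a, A a -> d * hnorm a <= hnorm (Q S a).
Proof.
  destruct QA_bound as [d [Hd Hb]].
  pose proof (range_closed d Hd Hb) as CR.
  set (R := fun a => exists w, S w /\ a = Q A w) in *.
  assert (forall a, A a -> R a) as AR.
  { intros a Aa. set (p := Q R a).
    assert (R p) as Rp by apply (Q_in R CR).
    assert (A p) as Ap. { destruct Rp as [w [_ ->]]. apply (Q_in A CA). }
    assert (hsub a p = hzero H) as E.
    { destruct DS as [D0 _]. apply D0. apply cs_sub; auto.
      intros w Sw. 
      assert (Q A (hsub a p) = hsub a p) as E1 by (apply (Q_id A CA), cs_sub; auto).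
      rewrite <- E1, (Q_sym A CA). apply (Q_orth R CR a). exists w; auto. }
    replace a with p; auto. apply vec_ext; intro z.
    assert (ip (hsub a p) z = 0) as E2 by (rewrite E; apply ip0l). rewrite ipBl in E2. lra. }
  exists d. split; auto. intros a Aa.
  destruct (AR a Aa) as [w [Sw Ea]].
  specialize (Hb w Sw). rewrite <- Ea in Hb.
  assert (ip a a = ip (Q S a) w) as E.
  { rewrite Ea at 2. rewrite <- (Q_sym A CA). rewrite (Q_id A CA a Aa).
    rewrite (Q_sym S CS), (Q_id S CS w Sw). reflexivity. }
  pose proof (cs' (Q S a) w). rewrite <- E, <- norm_sq in H0.
  pose proof (norm_ge0 a). pose proof (norm_ge0 w). pose proof (norm_ge0 (Q S a)).
  destruct (Req_dec (hnorm a) 0) as [Z|Z]. { rewrite Z. nra. }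
  assert (d * hnorm a * hnorm a <= hnorm (Q S a) * hnorm a) as T by nra.
  apply Rmult_le_reg_r with (hnorm a). lra. exact T.
Qed.

End CApos.

Lemma frac_le (a b c d : R) : 0 < b -> 0 < d -> a * d <= c * b -> a / b <= c / d.
Proof.
  intros Hb Hd E. unfold Rdiv.
  apply Rmult_le_reg_r with (b * d). nra.
  replace (a * / b * (b * d)) with (a * d) by (field; lra).
  replace (c * / d * (b * d)) with (c * b) by (field; lra). exact E.
Qed.
Lemma frac_le_inv (a b c d : R) : 0 < b -> 0 < d -> a / b <= c / d -> a * d <= c * b.
Proof.
  intros Hb Hd E. unfold Rdiv in E.
  apply Rmult_le_compat_r with (r := b * d) in E; [|nra].
  replace (a * / b * (b * d)) with (a * d) in E by (field; lra).
  replace (c * / d * (b * d)) with (c * b) in E by (field; lra). exact E.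
Qed.

Lemma div_le_l (a b c : R) : 0 < b -> a <= c * b -> a / b <= c.
Proof. intros Hb E. apply Rmult_le_reg_r with b; auto. unfold Rdiv. rewrite Rmult_assoc, Rinv_l; lra. Qed.
Lemma div_le_r (a b c : R) : 0 < b -> a / b <= c -> a <= c * b.
Proof. intros Hb E. apply Rmult_le_compat_r with (r := b) in E; [|lra].
  unfold Rdiv in E. rewrite Rmult_assoc, Rinv_l in E; lra. Qed.

Lemma le_div_r (a b c : R) : 0 < b -> c <= a / b -> c * b <= a.
Proof. intros Hb E. apply Rmult_le_compat_r with (r := b) in E; [|lra].
  unfold Rdiv in E. rewrite Rmult_assoc, Rinv_l in E; lra. Qed.

Section Main.
Context {H : RHilbert}.
Local Notation ip := (hinner H).
Variables S A : H -> Prop.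
Hypothesis CS : closed_subspace S.
Hypothesis CA : closed_subspace A.
Hypothesis DS : direct_sum_whole A (orth S).
Local Notation Q := (Q S).
Local Notation P := (P S A).

Lemma orthA_ip b a : orth A b -> A a -> ip b a = 0.
Proof. intros Hb Ha. apply Hb, Ha. Qed.

Lemma angle_sum : 0 < sin_angle (orth A) S -> nonzero_sub A -> nonzero_sub (orth A) ->
  cos_angle A S ^ 2 + cos_angle (orth A) S ^ 2 <= 1.
Proof.
  intros Hs NA NA'.
  assert (exists b, orth A b /\ b <> hzero H /\ 0 < rs S b) as [b [Ob [Nb Rb]]].
  { apply NNPP. intro N. assert (sin_angle (orth A) S <= 0); [|lra].
    apply (ang_sin_least S CS (orth A) NA'). intros x Vx Nx. apply Rnot_lt_le. intro Hx. apply N. eauto. }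
  pose proof (ang_cos_range S CS A NA) as [cA0 cA1].
  pose proof (ang_cos_range S CS (orth A) NA') as [k0 k1].
  set (x := Q b). set (w := hsub b x).
  assert (Bpos : 0 < ip b b) by (apply ip_pos_nz; auto).
  assert (Epy : ip b b = ip x x + ip w w) by apply (pythag S CS b).
  assert (Kb : cos_angle (orth A) S ^ 2 <= ip x x / ip b b).
  { replace (ip x x / ip b b) with (rc S b ^ 2) by (unfold x; apply rc_sq; auto). apply sq_le_of; auto. apply (ang_cos_lb S CS (orth A)); auto. }
  destruct (classic (x = hzero H)) as [Ex|Nx].
  { rewrite Ex, ip0l in Kb. unfold Rdiv in Kb. rewrite Rmult_0_l in Kb.
    assert (cos_angle A S ^2 <= 1) by nra. lra. }
  set (a := P x). set (t := hsub x a).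
  assert (Ea : a = hsub x t) by (apply vec_ext; intro z; unfold t; autorewrite with ipdb; ring).
  assert (Sx : S x) by apply (Q_in S CS).
  assert (Ot : orth S t) by apply (P_rest S A DS x).
  assert (Aa : A a) by apply (P_in S A DS x).
  assert (Qa : Q a = x) by (unfold a; rewrite (QP S CS A DS), (Q_id S CS x Sx); reflexivity).
  assert (Na : a <> hzero H).
  { intro E. apply Nx. rewrite <- Qa, E. apply (Q_zero S CS). apply orth_zero. }
  assert (CAb : cos_angle A S ^ 2 <= ip x x / ip a a).
  { replace (ip x x / ip a a) with (rc S a ^ 2) by (rewrite rc_sq, Qa; auto). apply sq_le_of; auto. apply (ang_cos_lb S CS A NA); auto. }
  assert (xt : ip x t = 0) by (apply (orth_ip_S S); auto).
  assert (xw : ip x w = 0) by (apply (ip_Q_IQ S CS)).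
  assert (ab : ip b a = 0) by (apply Ob; auto).
  assert (Eb : b = hadd H x w) by (apply vec_ext; intro z; unfold w; autorewrite with ipdb; ring).
  assert (twX : ip t w = ip x x).
  { rewrite Ea, Eb in ab. autorewrite with ipdb in ab.
    rewrite (hinner_sym H w x), (hinner_sym H w t), xt, xw in ab. lra. }
  assert (aa : ip a a = ip x x + ip t t).
  { rewrite Ea. autorewrite with ipdb. rewrite (hinner_sym H t x), xt. ring. }
  pose proof (cs_sq t w) as CSq. rewrite twX in CSq.
  assert (Xp : 0 < ip x x) by (apply ip_pos_nz; auto).
  pose proof (ip_pos t). pose proof (ip_pos w).
  assert (ip x x / ip a a <= ip w w / ip b b).
  { apply frac_le. rewrite aa; lra. lra. rewrite aa, Epy. nra. }
  assert (ip w w / ip b b = 1 - ip x x / ip b b) by (rewrite Epy; field; lra).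
  lra.
Qed.


Definition Bf (lam : R) (x : H) : H :=
  hadd H (hscal H lam (obproj A (orth S) x)) (hscal H (1 - lam) (oproj S x)).

Lemma PA a : A a -> P a = a.
Proof. intro Aa. apply (P_char S A CA DS); auto. rewrite hsub_diag. apply orth_zero. Qed.

Section Lam.
Variable lam : R.
Hypothesis Hl : 0 < lam <= 1.

Definition yof b := hsub b (hscal H (1 - lam) (Q b)).

Lemma yof_orth b : orth A b -> orth (range (Bf lam)) (yof b).
Proof.
  intros Ob v [x ->]. unfold yof, Bf. fold (P x). fold (Q x).
  autorewrite with ipdb.
  rewrite (orthA_ip b (P x) Ob (P_in S A DS x)).
  rewrite (Q_sym S CS b (P x)), (QP S CS A DS x).
  rewrite (Q_ip_l S CS b (Q x)), (QQ S CS x), <- (Q_ip_r S CS b x). ring.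
Qed.

Lemma Q_yof b : Q (yof b) = hscal H lam (Q b).
Proof.
  unfold yof. rewrite (Q_sub S CS), (Q_scal S CS), (QQ S CS).
  apply vec_ext; intro z; autorewrite with ipdb; ring.
Qed.

Lemma yof_of y : orth (range (Bf lam)) y ->
  orth A (hadd H (hsub y (Q y)) (hscal H (/ lam) (Q y))) /\
  y = yof (hadd H (hsub y (Q y)) (hscal H (/ lam) (Q y))).
Proof.
  intro Oy. split.
  - intros a Aa.
    assert (ip y (Bf lam a) = 0) as E by (apply Oy; exists a; reflexivity).
    unfold Bf in E. fold (P a) in E. fold (Q a) in E. rewrite (PA a Aa) in E.
    autorewrite with ipdb in E. autorewrite with ipdb.
    rewrite (Q_sym S CS y a).
    apply Rmult_eq_reg_l with lam; [|lra].
    replace (lam * (ip y a - ip y (Q a) + / lam * ip y (Q a))) with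
            (lam * ip y a + (1 - lam) * ip y (Q a)) by (field; lra).
    lra.
  - unfold yof. rewrite (Q_add S CS), (Q_sub S CS), (Q_scal S CS), (QQ S CS).
    apply vec_ext; intro z; autorewrite with ipdb. field. lra.
Qed.

Lemma yof_rs_sq b : b <> hzero H ->
  let U := ip (hsub b (Q b)) (hsub b (Q b)) in let V := ip (Q b) (Q b) in
  0 < U + V /\ rs S b ^ 2 = U / (U + V) /\ yof b <> hzero H /\
  rs S (yof b) ^ 2 = U / (U + lam ^ 2 * V).
Proof.
  intros Nb U V.
  assert (E1 : ip b b = V + U) by apply (pythag S CS b).
  assert (0 < ip b b) by (apply ip_pos_nz; auto).
  assert (0 <= U) by apply ip_pos. assert (0 <= V) by apply ip_pos.
  assert (Ey : hsub (yof b) (Q (yof b)) = hsub b (Q b)).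
  { rewrite Q_yof. unfold yof. apply vec_ext; intro z; autorewrite with ipdb; ring. }
  assert (E2 : ip (yof b) (yof b) = U + lam ^ 2 * V).
  { rewrite (pythag S CS (yof b)), Ey, Q_yof, ipZl, ipZr. fold U V. ring. }
  assert (R1 : rs S b ^ 2 = U / (U + V)).
  { rewrite (rs_sq S b Nb). fold U. rewrite E1. f_equal. ring. }
  assert (R2 : yof b <> hzero H -> rs S (yof b) ^ 2 = U / (U + lam ^ 2 * V)).
  { intro Ny. rewrite (rs_sq S (yof b) Ny), Ey, E2. reflexivity. }
  clearbody U V.
  assert (lam ^ 2 * (U + V) <= U + lam ^ 2 * V).
  { assert (lam ^ 2 <= 1) by nra. nra. }
  assert (0 < U + V) by lra. assert (0 < lam ^ 2) by nra.
  assert (0 < lam ^ 2 * (U + V)) by (apply Rmult_lt_0_compat; lra).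
  assert (0 < U + lam ^ 2 * V) by lra.
  assert (Ny : yof b <> hzero H).
  { intro E. rewrite E, ip0l in E2. lra. }
  split; [lra|]. split; auto.
Qed.


Lemma yof0 : yof (hzero H) = hzero H.
Proof.
  unfold yof. rewrite (Q_zero S CS) by apply orth_zero.
  apply vec_ext; intro z; autorewrite with ipdb; ring.
Qed.

Lemma sinBB_lub (NA' : nonzero_sub (orth A)) (Hs : 0 < sin_angle (orth A) S) :
  is_lub (sinset S (orth (range (Bf lam))))
    (sqrt (sin_angle (orth A) S ^ 2 /
      (sin_angle (orth A) S ^ 2 + lam ^ 2 * cos_angle (orth A) S ^ 2))).
Proof.
  pose proof (ang_sin_cos S CS (orth A) NA') as SC.
  pose proof (ang_sin_range S CS (orth A) NA') as SR.
  pose proof (ang_cos_range S CS (orth A) NA') as CR.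
  set (sg := sin_angle (orth A) S) in *. set (kp := cos_angle (orth A) S) in *.
  assert (0 < sg ^ 2) by nra. assert (0 <= lam ^ 2 * kp ^ 2) by nra.
  assert (Dp : 0 < sg ^ 2 + lam ^ 2 * kp ^ 2) by lra.
  assert (T1 : sg ^ 2 / (sg ^ 2 + lam ^ 2 * kp ^ 2) <= 1) by (apply div_le_l; lra).
  assert (0 < lam ^ 2) by nra. assert (lam ^ 2 <= 1) by nra.
  split.
  - intros r Hr. apply (sinset_iff S CS) in Hr. destruct Hr as [y [Oy [Ny ->]]].
    destruct (yof_of y Oy) as [Ob Ey].
    set (b := hadd H (hsub y (Q y)) (hscal H (/ lam) (Q y))) in *.
    assert (Nb : b <> hzero H).
    { intro E. apply Ny. rewrite Ey, E. apply yof0. }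
    destruct (yof_rs_sq b Nb) as [UV [R1 [_ R2]]].
    pose proof (ang_sin_ub S CS (orth A) NA' b Ob Nb) as Rb. fold sg in Rb.
    rewrite Ey. apply le_sqrt_of. apply rs_ge0. rewrite R2.
    set (U := ip (hsub b (Q b)) (hsub b (Q b))) in *. set (V := ip (Q b) (Q b)) in *.
    assert (0 <= U) by apply ip_pos. assert (0 <= V) by apply ip_pos.
    assert (Rb2 : rs S b ^ 2 <= sg ^ 2) by (apply sq_le_of; auto; apply rs_ge0).
    rewrite R1 in Rb2. apply div_le_r in Rb2; auto.
    clearbody U V.
    apply frac_le; [nra|lra|].
    assert (0 <= lam ^ 2 * (sg ^ 2 * (U + V) - U)) by (apply Rmult_le_pos; lra).
    replace (kp ^ 2) with (1 - sg ^ 2) by lra. nra.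
  - intros M HM.
    pose proof NA' as NA2. destruct NA2 as [b0 [Ob0 Nb0]].
    destruct (yof_rs_sq b0 Nb0) as [_ [_ [Ny0 _]]].
    assert (rs S (yof b0) <= M).
    { apply HM. apply (sinset_iff S CS). exists (yof b0). split; auto. apply yof_orth; auto. }
    pose proof (rs_ge0 S (yof b0)).
    destruct (Rle_or_lt 1 M) as [M1|M1].
    { apply Rle_trans with 1; auto. apply sqrt_le_of; lra. }
    assert (0 < 1 - M ^ 2 + M ^ 2 * lam ^ 2) by nra.
    set (g := M ^ 2 * lam ^ 2 / (1 - M ^ 2 + M ^ 2 * lam ^ 2)).
    assert (0 <= g) by (apply Rmult_le_pos; [nra| apply Rlt_le, Rinv_0_lt_compat; lra]).
    assert (sg <= sqrt g).
    { apply (ang_sin_least S CS (orth A) NA'). intros b Ob Nb.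
      destruct (yof_rs_sq b Nb) as [UV [R1 [Ny R2]]].
      assert (rs S (yof b) <= M).
      { apply HM. apply (sinset_iff S CS). exists (yof b). split; auto. apply yof_orth; auto. }
      assert (Ry2 : rs S (yof b) ^ 2 <= M ^ 2) by (apply sq_le_of; auto; apply rs_ge0).
      apply le_sqrt_of. apply rs_ge0. rewrite R1. rewrite R2 in Ry2.
      set (U := ip (hsub b (Q b)) (hsub b (Q b))) in *. set (V := ip (Q b) (Q b)) in *.
      assert (0 <= U) by apply ip_pos. assert (0 <= V) by apply ip_pos. clearbody U V.
      apply div_le_r in Ry2; [|nra].
      unfold g. apply frac_le; [lra|lra|]. nra. }
    assert (Sg : sg ^ 2 <= g) by (rewrite <- (pow2_sqrt g); auto; apply sq_le_of; lra).
    unfold g in Sg. apply le_div_r in Sg; auto.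
    apply sqrt_le_of; [lra|]. apply div_le_l; auto.
    replace (kp ^ 2) with (1 - sg ^ 2) by lra. nra.
Qed.

End Lam.

Lemma sinBB0_lub (NoS : nonzero_sub (orth S)) :
  is_lub (sinset S (orth (range (Bf 0)))) 1.
Proof.
  assert (EB : forall x, Bf 0 x = Q x).
  { intro x. unfold Bf. apply vec_ext; intro z; autorewrite with ipdb. fold (Q x). ring. }
  assert (Ors : forall t, orth S t -> t <> hzero H -> rs S t = 1).
  { intros t Ot Nt. unfold rs. rewrite (Q_zero S CS t Ot).
    replace (hsub t (hzero H)) with t by (apply vec_ext; intro z; autorewrite with ipdb; ring).
    pose proof (norm_pos t Nt). field. lra. }
  split.
  - intros r Hr. apply (sinset_iff S CS) in Hr. destruct Hr as [y [Oy [Ny ->]]].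
    rewrite Ors; auto. lra. intros s Ss.
    rewrite <- (Q_id S CS s Ss), <- EB. apply Oy. exists s. reflexivity.
  - intros M HM. destruct NoS as [t [Ot Nt]].
    rewrite <- (Ors t Ot Nt). apply HM. apply (sinset_iff S CS). exists t. split; auto.
    intros v [x ->]. rewrite EB. apply Ot. apply Q_in; auto.
Qed.

End Main.


Theorem mainTheorem7 (H : RHilbert) (S A : H -> Prop) (lam : R) :
  closed_subspace S -> closed_subspace A ->
  nonzero_sub S -> nonzero_sub A -> nonzero_sub (orth S) -> nonzero_sub (orth A) ->
  direct_sum_whole A (orth S) ->
  0 < sin_angle (orth A) S ->
  0 <= lam <= 1 ->
  let B := fun x : H => hadd H (hscal H lam (obproj A (orth S) x))
                                (hscal H (1 - lam) (oproj S x)) in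
  let BB := range B in
  1 / (1 + lam ^ 2 * (sin_angle A S ^ 2 / cos_angle A S ^ 2))
    <= sin_angle (orth BB) S ^ 2 <=
  1 / (1 + lam ^ 2 * (cos_angle (orth A) S ^ 2 / sin_angle (orth A) S ^ 2)).
Proof.
  intros CS CA NS NA NoS NoA DS Hs Hl B BB.
  pose proof (ang_sin_cos S CS (orth A) NoA) as SC.
  pose proof (ang_sin_range S CS (orth A) NoA) as SR.
  pose proof (ang_cos_range S CS (orth A) NoA) as CR.
  pose proof (ang_sin_cos S CS A NA) as SCA.
  pose proof (ang_sin_range S CS A NA) as SRA.
  pose proof (ang_cos_range S CS A NA) as CRA.
  pose proof (angle_sum S A CS DS Hs NA NoA) as AS.
  assert (cApos : 0 < cos_angle A S).
  { destruct (cA_bound S A CS CA DS) as [d [Hd Hb]].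
    apply Rlt_le_trans with d; auto. apply (ang_cos_greatest S CS A NA).
    intros a Aa Na. unfold rc. pose proof (norm_pos a Na).
    apply Rmult_le_reg_r with (hnorm a); auto. unfold Rdiv.
    rewrite Rmult_assoc, Rinv_l by lra. rewrite Rmult_1_r. apply Hb; auto. }
  set (sg := sin_angle (orth A) S) in *. set (kp := cos_angle (orth A) S) in *.
  set (sA := sin_angle A S) in *. set (cA := cos_angle A S) in *.
  assert (KEY : sin_angle (orth BB) S ^ 2 = sg ^ 2 / (sg ^ 2 + lam ^ 2 * kp ^ 2)).
  { destruct (Req_dec lam 0) as [L0|L0].
    - subst lam. replace (sin_angle (orth BB) S) with 1.
      field. lra. symmetry. apply Rsup_eq. exact (sinBB0_lub S A CS NoS).
    - replace (sin_angle (orth BB) S) with (sqrt (sg ^ 2 / (sg ^ 2 + lam ^ 2 * kp ^ 2))).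
      + rewrite pow2_sqrt. reflexivity. apply Rmult_le_pos. nra.
        apply Rlt_le, Rinv_0_lt_compat. nra.
      + symmetry. apply Rsup_eq. apply (sinBB_lub S A CS CA DS lam); auto. lra. }
  rewrite KEY. clearbody sg kp sA cA.
  assert (0 < sg ^ 2) by nra.
  assert (0 < cA ^ 2) by nra.
  assert (0 <= lam ^ 2) by nra.
  split.
  - replace (1 / (1 + lam ^ 2 * (sA ^ 2 / cA ^ 2))) with (cA ^ 2 / (cA ^ 2 + lam ^ 2 * sA ^ 2))
      by (field; split; nra).
    apply frac_le; [nra|nra|].
    replace (sA ^ 2) with (1 - cA ^ 2) by lra. replace (sg ^ 2) with (1 - kp ^ 2) by lra.
    assert (0 <= lam ^ 2 * (1 - cA ^ 2 - kp ^ 2)) by (apply Rmult_le_pos; lra).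
    nra.
  - right. field. split; nra.
Qed.
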